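(* For $\mathbf v\in\mathbb{R}^\infty$, let $h_{\mathbf v}(x)$ be the generating function of $\mathbb{F}^{\rm S}\mathbf v$ and $h_{-\mathbf v}(x)$ the generating function of $\mathbb{L}^{\rm S}\mathbf v$, where $\mathbb{F}^{\rm S}=(1,x(1+x))$ and $\mathbb{L}^{\rm S}=(1+2x,x(1+x))$. Let $C(x)=\frac{1-\sqrt{1-4x}}{2x}$ and $M(x)=\frac{1-x-\sqrt{(1-x)^2-4x^2}}{2x^2}$. Then: (a) $h_{\mathbf v}(xC(x))=\frac{1}{1+2xC(x)}\,h_{-\mathbf v}(xC(x))$; (b) $h_{-\mathbf v}\!\left(x+\frac{x^2}{1-x}M\!\left(\frac{x}{1-x}\right)\right)=\left(1+2x+\frac{2x^2}{1-x}M\!\left(\frac{x}{1-x}\right)\right)h_{\mathbf v}\!\left(x+\frac{x^2}{1-x}M\!\left(\frac{x}{1-x}\right)\right)$.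
   Context: $\mathbb{R}^\infty$ is the space of real column vectors, identified with their generating functions. For formal power series $g(x)$ and $f(x)$ with $f(0)=0$, $(g(x),f(x))$ denotes the infinite lower triangular matrix whose $j$-th column has generating function $g(x)f(x)^j$; it maps a vector with generating function $U(x)$ to one with generating function $g(x)U(f(x))$. *)

(* Defs.v *)
From mathcomp Require Import all_boot all_order all_algebra.
Set Implicit Arguments. Unset Strict Implicit. Unset Printing Implicit Defensive.
Import Order.TTheory GRing.Theory Num.Theory.
Local Open Scope ring_scope.

Section FPS.
Variable R : fieldType.

(* a formal power series = its coefficient sequence; also a vector of R^oo
   identified with its generating function *)
Definition fps := nat -> R.

Definition fps_const (c : R) : fps := fun n => if n == 0%N then c else 0.
Definition fps_X : fps := fun n => if n == 1%N then 1 else 0.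
Definition fps_add (f g : fps) : fps := fun n => f n + g n.
Definition fps_opp (f : fps) : fps := fun n => - f n.
Definition fps_scale (c : R) (f : fps) : fps := fun n => c * f n.
Definition fps_mul (f g : fps) : fps :=
  fun n => \sum_(i < n.+1) f i * g (n - i)%N.
Definition fps_pow (f : fps) (k : nat) : fps := iter k (fps_mul f) (fps_const 1).
(* composition g(f(x)); meaningful when f 0 = 0 (then f^k has order >= k) *)
Definition fps_comp (g f : fps) : fps :=
  fun n => \sum_(k < n.+1) g k * fps_pow f k n.
Definition fps_divX (f : fps) : fps := fun n => f n.+1.

(* multiplicative inverse of a series with invertible constant term *)
Fixpoint inv_coefs (f : fps) (n : nat) : seq R :=
  match n with
  | 0 => [:: (f 0%N)^-1]
  | m.+1 => let s := inv_coefs f m in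
      rcons s (- (f 0%N)^-1 * \sum_(k < m.+1) f k.+1 * nth 0 s (m - k)%N)
  end.
Definition fps_inv (f : fps) : fps := fun n => nth 0 (inv_coefs f n) n.

(* formal binomial series (1+u)^(1/2) = sum_n binom(1/2,n) u^n *)
Definition sqrt1p_series : fps :=
  fun n => (\prod_(i < n) (2^-1 - i%:R)) / (n`!)%:R.
(* formal square root of a series with constant term 1 *)
Definition fps_sqrt (f : fps) : fps :=
  fps_comp sqrt1p_series (fps_add f (fps_opp (fps_const 1))).

(* C(x) = (1 - sqrt(1-4x)) / (2x) *)
Definition catalanC : fps :=
  fps_scale 2^-1 (fps_divX (fps_add (fps_const 1)
     (fps_opp (fps_sqrt (fps_add (fps_const 1) (fps_scale (-4) fps_X)))))).

(* M(x) = (1 - x - sqrt((1-x)^2 - 4x^2)) / (2x^2) *)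
Definition motzkinM : fps :=
  let omx := fps_add (fps_const 1) (fps_opp fps_X) in
  fps_scale 2^-1 (fps_divX (fps_divX (fps_add omx
     (fps_opp (fps_sqrt (fps_add (fps_pow omx 2)
                                  (fps_scale (-4) (fps_pow fps_X 2)))))))).

(* Riordan array (g, f) acting on a vector with generating function U:
   the result has generating function g(x) U(f(x)). *)
Definition riordan_apply (g f U : fps) : fps := fps_mul g (fps_comp U f).

Definition xx1 : fps := fps_mul fps_X (fps_add (fps_const 1) fps_X).
Definition FS_apply (v : fps) : fps := riordan_apply (fps_const 1) xx1 v.
Definition LS_apply (v : fps) : fps :=
  riordan_apply (fps_add (fps_const 1) (fps_scale 2 fps_X)) xx1 v.

Definition h_pos (v : fps) : fps := FS_apply v.
Definition h_neg (v : fps) : fps := LS_apply v.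

End FPS.

(* Main.v *)
Require Import Defs.
From mathcomp Require Import all_boot all_order all_algebra.
From mathcomp Require Import zify.
From Stdlib Require Import FunctionalExtensionality.
Import GRing.Theory Num.Theory.
Local Open Scope ring_scope.

Section Lem.
Variable R : fieldType.
Implicit Types (a b c f g h : fps R).

Lemma fext a b : (forall n, a n = b n) -> a = b.
Proof. exact: functional_extensionality. Qed.

Lemma mul_coef_poly a b (p q : {poly R}) n :
  (forall j, (j <= n)%N -> a j = p`_j) -> (forall j, (j <= n)%N -> b j = q`_j) ->
  fps_mul a b n = (p * q)`_n.
Proof.
move=> Ha Hb; rewrite coefM /fps_mul; apply: eq_bigr => i _.
rewrite Ha ?Hb //; last exact: leq_ord.
exact: leq_subr.
Qed.

Definition P n a : {poly R} := \poly_(i < n.+1) a i.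

Lemma P_coef n a j : (j <= n)%N -> a j = (P n a)`_j.
Proof. by move=> H; rewrite coef_poly ltnS H. Qed.

Lemma mul_P n a b m : (m <= n)%N -> fps_mul a b m = (P n a * P n b)`_m.
Proof.
move=> Hm; apply: mul_coef_poly => j Hj; apply: P_coef; exact: leq_trans Hj Hm.
Qed.

Lemma fps_mulA a b c : fps_mul a (fps_mul b c) = fps_mul (fps_mul a b) c.
Proof.
apply: fext => n.
rewrite (@mul_coef_poly _ _ (P n a) (P n b * P n c)); last first.
- by move=> j Hj; apply: mul_P.
- by move=> j Hj; apply: P_coef.
rewrite (@mul_coef_poly _ _ (P n a * P n b) (P n c)); last first.
- by move=> j Hj; apply: P_coef.
- by move=> j Hj; apply: mul_P.
by rewrite mulrA.
Qed.

Lemma fps_mulC a b : fps_mul a b = fps_mul b a.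
Proof. by apply: fext => n; rewrite !(@mul_P n) // mulrC. Qed.

Lemma fps_mulDl a b c : fps_mul (fps_add a b) c = fps_add (fps_mul a c) (fps_mul b c).
Proof.
apply: fext => n; rewrite /fps_mul /fps_add -big_split /=.
by apply: eq_bigr => i _; rewrite mulrDl.
Qed.

Lemma fps_mulZl k a b : fps_mul (fps_scale k a) b = fps_scale k (fps_mul a b).
Proof.
apply: fext => n; rewrite /fps_mul /fps_scale mulr_sumr.
by apply: eq_bigr => i _; rewrite mulrA.
Qed.

Lemma fps_mul1l a : fps_mul (fps_const 1) a = a.
Proof.
apply: fext => n; rewrite /fps_mul big_ord_recl /= big1 ?addr0.
  by rewrite /fps_const /= mul1r ?subn0.
by move=> i _; rewrite /fps_const /= mul0r.
Qed.

Lemma fps_mul0 a b : fps_mul a b 0%N = a 0%N * b 0%N.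
Proof. by rewrite /fps_mul big_ord1. Qed.

Lemma fps_XH_S h k : fps_mul (fps_X R) h k.+1 = h k.
Proof.
rewrite /fps_mul big_ord_recl big_ord_recl /= big1.
  by rewrite /fps_X /= mul0r mul1r add0r addr0 subSS subn0.
by move=> i _; rewrite /fps_X /= mul0r.
Qed.

Lemma fps_compD a b f : fps_comp (fps_add a b) f = fps_add (fps_comp a f) (fps_comp b f).
Proof.
apply: fext => n; rewrite /fps_comp /fps_add -big_split /=.
by apply: eq_bigr => i _; rewrite mulrDl.
Qed.

Lemma fps_compZ k a f : fps_comp (fps_scale k a) f = fps_scale k (fps_comp a f).
Proof.
apply: fext => n; rewrite /fps_comp /fps_scale mulr_sumr.
by apply: eq_bigr => i _; rewrite mulrA.
Qed.

Section Comp.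
Variable f : fps R.
Hypothesis f0 : f 0%N = 0.

Lemma pow_lt k m : (m < k)%N -> fps_pow f k m = 0.
Proof.
elim: k m => [//|k IH] m Hm.
change (fps_pow f k.+1) with (fps_mul f (fps_pow f k)).
rewrite /fps_mul big1 // => i _.
case: (posnP i) => [->|Hi]; first by rewrite f0 mul0r.
rewrite IH ?mulr0 //.
have := ltn_ord i; lia.
Qed.

Lemma comp_wide g n N : (n < N)%N ->
  fps_comp g f n = \sum_(k < N) g k * fps_pow f k n.
Proof.
move=> HN; rewrite /fps_comp (big_ord_widen N (fun k => g k * fps_pow f k n)) //.
rewrite big_mkcond; apply: eq_bigr => k _.
case: ifP => // /negbT; rewrite -leqNgt => H.
by rewrite pow_lt ?mulr0.
Qed.

Lemma comp_XH h : fps_comp (fps_mul (fps_X R) h) f = fps_mul f (fps_comp h f).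
Proof.
apply: fext => n.
have -> : fps_mul f (fps_comp h f) n = \sum_(k < n.+1) h k * fps_pow f k.+1 n.
  rewrite {1}/fps_mul.
  under eq_bigr => i _ do rewrite (comp_wide _ (n - i) n.+1) ?mulr_sumr ?ltnS ?leq_subr //.
  rewrite exchange_big /=; apply: eq_bigr => k _.
  change (fps_pow f k.+1) with (fps_mul f (fps_pow f k)).
  rewrite /fps_mul mulr_sumr; apply: eq_bigr => i _.
  by rewrite mulrCA.
rewrite (comp_wide _ n n.+2) // big_ord_recl fps_mul0.
have -> : fps_X R 0%N = 0 by [].
rewrite !mul0r add0r; apply: eq_bigr => i _.
by rewrite lift0 fps_XH_S.
Qed.

End Comp.

Lemma size_inv g n : size (inv_coefs g n) = n.+1.
Proof. by elim: n => //= n IH; rewrite size_rcons IH. Qed.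

Lemma nth_inv_d g i d : nth 0 (inv_coefs g (i + d)) i = fps_inv g i.
Proof.
elim: d => [|d IH]; first by rewrite addn0.
rewrite addnS /= nth_rcons size_inv ltnS leq_addr; exact: IH.
Qed.

Lemma nth_inv g i n : (i <= n)%N -> nth 0 (inv_coefs g n) i = fps_inv g i.
Proof. by move=> H; rewrite -(subnKC H) nth_inv_d. Qed.

Lemma fps_inv_S g m : fps_inv g m.+1 =
  - (g 0%N)^-1 * \sum_(k < m.+1) g k.+1 * fps_inv g (m - k)%N.
Proof.
rewrite {1}/fps_inv /= nth_rcons size_inv ltnn eqxx.
congr (_ * _); apply: eq_bigr => k _; rewrite nth_inv //; exact: leq_subr.
Qed.

Lemma fps_mulV g : g 0%N != 0 -> fps_mul g (fps_inv g) = fps_const 1.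
Proof.
move=> Hg; apply: fext => -[|m].
  by rewrite fps_mul0 /fps_inv /= mulfV.
rewrite /fps_mul big_ord_recl /= fps_inv_S ?subn0.
under eq_bigr => i _ do rewrite /bump /= subSS.
rewrite mulrA mulrN mulfV // mulN1r addNr /fps_const //.
Qed.

End Lem.

Theorem corollary4p6 (R : realFieldType) (v : fps R) :
  (let xC := fps_mul (fps_X R) (catalanC R) in
   fps_comp (h_pos v) xC
   = fps_mul (fps_inv (fps_add (fps_const 1) (fps_scale 2 xC)))
             (fps_comp (h_neg v) xC))
  /\
  (let inv1mx := fps_inv (fps_add (fps_const 1) (fps_opp (fps_X R))) in
   let T := fps_mul (fps_mul (fps_pow (fps_X R) 2) inv1mx)
                    (fps_comp (motzkinM R) (fps_mul (fps_X R) inv1mx)) in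
   let y := fps_add (fps_X R) T in
   fps_comp (h_neg v) y
   = fps_mul (fps_add (fps_add (fps_const 1) (fps_scale 2 (fps_X R)))
                      (fps_scale 2 T))
             (fps_comp (h_pos v) y)).
Proof.
have Hneg : h_neg v = fps_add (h_pos v) (fps_scale 2 (fps_mul (fps_X R) (h_pos v))).
  rewrite /h_neg /h_pos /LS_apply /FS_apply /riordan_apply fps_mul1l.
  by rewrite fps_mulDl fps_mulZl fps_mul1l.
have Hcomp : forall y, y 0%N = 0 -> fps_comp (h_neg v) y =
    fps_mul (fps_add (fps_const 1) (fps_scale 2 y)) (fps_comp (h_pos v) y).
  move=> y y0; rewrite Hneg fps_compD fps_compZ comp_XH //.
  by rewrite fps_mulDl fps_mulZl fps_mul1l.
split.
- move=> xC.
  have x0 : xC 0%N = 0 by rewrite /xC fps_mul0 /fps_X /= mul0r.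
  rewrite Hcomp // fps_mulA [fps_mul (fps_inv _) _]fps_mulC fps_mulV ?fps_mul1l //.
  by rewrite /fps_add /fps_const /fps_scale /= x0 mulr0 addr0 oner_neq0.
- move=> inv1mx T y.
  have y0 : y 0%N = 0.
    rewrite /y /T /fps_add !fps_mul0 pow_lt // mul0r mul0r addr0 /fps_X //=.
  rewrite Hcomp //; congr fps_mul; apply: fext => n.
  rewrite /y /fps_add /fps_scale; rewrite mulrDr; exact: addrA.
Qed.
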